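(* For an integer $R\ge 2$ and $n\ge1$, let $\ket{\psi_R^n}=c\sum_{k=0}^{R-1}R_y\!\big(\tfrac{2\pi k}{R}\big)^{\otimes n}\ket{0}^{\otimes n}$, where $c>0$ is the normalization constant (defined whenever the sum is nonzero, which holds for all sufficiently large $n$). Then $\lim_{n\to\infty}\mathcal{C}(\ket{\psi_R^n})=\frac{R-1}{R}$, and there exists $n_0$ such that $\mathrm{rk}(\ket{\psi_R^n})=R$ for all $n\ge n_0$.
   Context: $R_y(\theta)=\exp(-i\theta\sigma_y/2)$ is the single-qubit rotation with $R_y(\theta)\ket{0}=\cos(\theta/2)\ket{0}+\sin(\theta/2)\ket{1}$. The CP rank $\mathrm{rk}(\ket{\psi})$ is the minimal $r$ with $\ket{\psi}=\sum_{i=1}^r c_i\bigotimes_{j=1}^n\ket{\phi_i^{(j)}}$. The concentratable entanglement is $\mathcal{C}(\ket{\psi})=1-\frac{1}{2^{n}}\sum_{\alpha\subseteq [n]}\mathrm{Tr}[\rho_\alpha^2]$, with $\rho_\alpha$ the reduced state on $\alpha$ and $\mathrm{Tr}[\rho_\emptyset^2]=1$. *)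

(* Defs.v *)
From HB Require Import structures.
From mathcomp Require Import all_boot all_order all_algebra.
From mathcomp Require Import complex.
From mathcomp Require Import all_classical all_reals all_analysis.
Set Implicit Arguments. Unset Strict Implicit. Unset Printing Implicit Defensive.
Import Order.TTheory GRing.Theory Num.Theory.
Local Open Scope ring_scope.
Local Open Scope complex_scope.

Section QuantumDefs.
Variable R : realType.
Local Notation C := (R[i]).

(* computational basis of n qubits: bit strings x : 'I_n -> bool *)
Definition config (n : nat) := {ffun 'I_n -> bool}.

Definition state (n : nat) := config n -> C.

(* single-qubit ket and operators, indexed by bool (false = |0>, true = |1>) *)
Definition ket0 : bool -> C := fun b => if b then 0 else 1.

(* R_y(theta) = exp(-i theta sigma_y / 2) = [[cos, -sin],[sin, cos]](theta/2);
   entry (b, b') = <b| R_y(theta) |b'> *)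
Definition Ry (theta : R) : bool -> bool -> C := fun b b' =>
  match b, b' with
  | false, false => (cos (theta / 2))%:C
  | false, true  => (- sin (theta / 2))%:C
  | true,  false => (sin (theta / 2))%:C
  | true,  true  => (cos (theta / 2))%:C
  end.

Definition apply1 (U : bool -> bool -> C) (v : bool -> C) : bool -> C :=
  fun b => \sum_(b' : bool) U b b' * v b'.

Definition tens (n : nat) (phi : 'I_n -> bool -> C) : state n :=
  fun x => \prod_(j < n) phi j (x j).

(* U^{(x) n} |0>^{(x) n} = (U|0>)^{(x) n} *)
Definition tens_pow_ket0 (n : nat) (U : bool -> bool -> C) : state n :=
  tens (fun _ : 'I_n => apply1 U ket0).

Definition sqnorm (n : nat) (psi : state n) : R :=
  \sum_(x : config n) complex.Re (psi x * (psi x)^*).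

Definition normalize (n : nat) (psi : state n) : state n :=
  fun x => ((Num.sqrt (sqnorm psi))^-1)%:C * psi x.

Definition mix (n : nat) (alpha : {set 'I_n}) (x y : config n) : config n :=
  [ffun j => if j \in alpha then x j else y j].

(* reduced density matrix rho_alpha of |psi><psi|, with rows/columns indexed by
   assignments on alpha (a, b only matter on alpha) *)
Definition rho (n : nat) (psi : state n) (alpha : {set 'I_n}) (a b : config n) : C :=
  \sum_(c : config n | [forall j in alpha, c j == false])
     psi (mix alpha a c) * (psi (mix alpha b c))^*.

(* Tr[rho_alpha^2]: sum over the assignments on alpha (represented by
   bit strings vanishing outside alpha) *)
Definition purity (n : nat) (psi : state n) (alpha : {set 'I_n}) : C :=
  \sum_(a : config n | [forall j in ~: alpha, a j == false])
    \sum_(b : config n | [forall j in ~: alpha, b j == false])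
      rho psi alpha a b * rho psi alpha b a.

Definition conc_ent (n : nat) (psi : state n) : C :=
  1 - (2 ^+ n)^-1 * \sum_(alpha : {set 'I_n}) purity psi alpha.

Definition has_cp_decomp (n : nat) (psi : state n) (r : nat) : Prop :=
  exists (c : 'I_r -> C) (phi : 'I_r -> 'I_n -> bool -> C),
    forall x : config n, psi x = \sum_(i < r) c i * tens (phi i) x.

Definition cp_rank_eq (n : nat) (psi : state n) (r : nat) : Prop :=
  has_cp_decomp psi r /\ forall r', has_cp_decomp psi r' -> (r <= r')%N.

Definition psiR_un (Rn n : nat) : state n :=
  fun x => \sum_(k < Rn) @tens_pow_ket0 n (Ry (2 * pi * k%:R / Rn%:R)) x.

Definition psiR (Rn n : nat) : state n := normalize (@psiR_un Rn n).

End QuantumDefs.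

(* Main.v *)
Require Import Defs.
From HB Require Import structures.
From mathcomp Require Import all_boot all_order all_algebra.
From mathcomp Require Import complex.
From mathcomp Require Import all_classical all_reals all_analysis.
Import Order.TTheory GRing.Theory Num.Theory.
Local Open Scope ring_scope.
Local Open Scope complex_scope.
Local Open Scope classical_set_scope.
Import numFieldNormedType.Exports.
From mathcomp Require Import ring lra zify.
Section Gen.
Variable R : realType.
Local Notation C := (R[i]).

Lemma sum_support (n : nat) (A : {set 'I_n}) (h : 'I_n -> bool -> R) :
  \sum_(x : config n | [forall j in A, x j == false]) \prod_(i in ~: A) h i (x i)
  = \prod_(i in ~: A) \sum_(b : bool) h i b.
Proof.
rewrite (big_distr_big_dep false) /=.
apply: eq_bigl => x.
apply/forall_inP/pfamilyP => [H|[Hs _] j jA].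
  split=> //.
  change (false.-support x \subset ~: A).
  apply/fintype.subsetP => j; rewrite !inE; apply: contraR => /negbNE jA.
  by apply/eqP; apply/eqP; exact: H.
move/fintype.subsetP: Hs => /(_ j); rewrite !inE jA /= => Hj.
by apply/negPn/negP => /Hj.
Qed.


Lemma sum_sets (n : nat) (x y : R) :
  \sum_(A : {set 'I_n}) (\prod_(i in A) x) * (\prod_(i in ~: A) y) = (x + y) ^+ n.
Proof.
have -> : (x + y) ^+ n = \prod_(i < n) \sum_(b : bool) (if b then x else y).
  rewrite -[in LHS](card_ord n) -prodr_const; apply: eq_bigr => i _.
  by rewrite big_bool /= addrC.
rewrite bigA_distr_bigA /=.
rewrite (reindex (fun f : {ffun 'I_n -> bool} => [set i | f i]%SET)) /=; last first.
  exists (fun A : {set 'I_n} => [ffun i => i \in A]) => f _.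
    by apply/ffunP => i; rewrite ffunE inE.
  by apply/setP => i; rewrite inE ffunE.
apply: eq_bigr => f _.
rewrite [RHS](bigID (fun i => f i)) /=.
congr (_ * _); apply: eq_big => i; rewrite ?inE //.
- by move=> ->.
- by move/negbTE => ->.
Qed.

Lemma functional_tens (n : nat) (f phi : 'I_n -> bool -> C) :
  \sum_(x : config n) (\prod_(q < n) f q (x q)) * tens phi x
  = \prod_(q < n) \sum_(b : bool) f q b * phi q b.
Proof.
rewrite bigA_distr_bigA /=; apply: eq_bigr => x _.
by rewrite /tens -big_split.
Qed.


Lemma conjcR (r : R) : Num.conj (r%:C) = r%:C :> C.
Proof. by apply: conj_Creal; apply/complex_realP; exists r. Qed.

Definition rhoR {n} (F : config n -> R) (al : {set 'I_n}) (a b : config n) : R :=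
  \sum_(c : config n | [forall j in al, c j == false]) F (mix al a c) * F (mix al b c).
Definition purR {n} (F : config n -> R) (al : {set 'I_n}) : R :=
  \sum_(a : config n | [forall j in ~: al, a j == false])
    \sum_(b : config n | [forall j in ~: al, b j == false])
      rhoR F al a b * rhoR F al b a.

Lemma conc_ent_real n (psi : state R n) (F : config n -> R) :
  (forall x, psi x = (F x)%:C) ->
  conc_ent psi = (1 - (2 ^+ n)^-1 * \sum_(al : {set 'I_n}) purR F al)%:C.
Proof.
move=> HF.
rewrite /conc_ent rmorphB rmorph1 rmorphM fmorphV rmorphXn /= rmorph_nat.
congr (_ - _ * _); rewrite rmorph_sum; apply: eq_bigr => al _.
rewrite /purity /purR rmorph_sum; apply: eq_bigr => a _.
rewrite rmorph_sum; apply: eq_bigr => b _.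
rewrite rmorphM /rho /rhoR !rmorph_sum; congr (_ * _); apply: eq_bigr => c _;
  by rewrite !HF conjcR rmorphM.
Qed.

Lemma sqnorm_real n (psi : state R n) (F : config n -> R) :
  (forall x, psi x = (F x)%:C) -> sqnorm psi = \sum_x F x ^+ 2.
Proof.
move=> HF; rewrite /sqnorm; apply: eq_bigr => x _.
by rewrite HF conjcR -rmorphM /= expr2.
Qed.

Lemma normalize_real n (psi : state R n) (F : config n -> R) :
  (forall x, psi x = (F x)%:C) ->
  forall x, normalize psi x = ((Num.sqrt (\sum_x F x ^+ 2))^-1 * F x)%:C.
Proof.
move=> HF x; rewrite /normalize (@sqnorm_real n psi F HF) HF.
by rewrite rmorphM.
Qed.

End Gen.
Arguments rhoR {R n}. Arguments purR {R n}.
Section Prod.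
Variable R : realType.
Variables (K : nat) (W : 'I_K -> bool -> R) (s : R).
Definition Fprod {n} (x : config n) : R := s * \sum_(k < K) \prod_(i < n) W k (x i).
Definition G (j k : 'I_K) : R := \sum_(b : bool) W j b * W k b.

Lemma Fmix n (al : {set 'I_n}) (a c : config n) :
  Fprod (mix al a c) = s * \sum_(k < K) (\prod_(i in al) W k (a i)) * \prod_(i in ~: al) W k (c i).
Proof.
rewrite /Fprod; congr (_ * _); apply: eq_bigr => k _.
rewrite (bigID (fun i => i \in al)) /=; congr (_ * _); apply: eq_big => i;
  rewrite ?inE // /mix ffunE.
- by move=> ->.
- by move/negbTE => ->.
Qed.

Lemma swap2 (I J L : finType) (P : pred I) (Q : pred J) (F : I -> J -> L -> R) :
  \sum_(a | P a) \sum_(b | Q b) \sum_(j : L) F a b j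
  = \sum_(j : L) \sum_(a | P a) \sum_(b | Q b) F a b j.
Proof.
rewrite (eq_bigr (fun a => \sum_(j : L) \sum_(b | Q b) F a b j)); last first.
  by move=> a _; rewrite exchange_big.
by rewrite exchange_big.
Qed.

Lemma rhoR_prod n (al : {set 'I_n}) (a b : config n) :
  rhoR Fprod al a b = s ^+ 2 * \sum_(j < K) \sum_(k < K)
     ((\prod_(i in al) W j (a i)) * (\prod_(i in al) W k (b i))) * \prod_(i in ~: al) G j k.
Proof.
rewrite /rhoR.
rewrite (eq_bigr (fun c : config n => s ^+ 2 * \sum_(j < K) \sum_(k < K)
     ((\prod_(i in al) W j (a i)) * (\prod_(i in al) W k (b i))) *
       \prod_(i in ~: al) (W j (c i) * W k (c i)))); last first.
  move=> c _; rewrite !Fmix mulrACA -expr2; congr (_ * _).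
  rewrite big_distrl; apply: eq_bigr => j _ /=.
  rewrite big_distrr; apply: eq_bigr => k _ /=.
  by rewrite big_split /= mulrACA.
rewrite -mulr_sumr; congr (_ * _).
rewrite exchange_big; apply: eq_bigr => j _.
rewrite exchange_big; apply: eq_bigr => k _.
rewrite -mulr_sumr (@sum_support R n al (fun i b => W j b * W k b)).
by [].
Qed.

Lemma sum_support_c n (al : {set 'I_n}) (j m : 'I_K) :
  \sum_(a : config n | [forall i in ~: al, a i == false])
     (\prod_(i in al) W j (a i)) * (\prod_(i in al) W m (a i))
  = \prod_(i in al) G j m.
Proof.
have := @sum_support R n (~: al) (fun i b => W j b * W m b).
rewrite finset.setCK => <-; apply: eq_bigr => a _.
by rewrite big_split.
Qed.

Lemma purR_prod n (al : {set 'I_n}) :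
  purR Fprod al = \sum_(j < K) \sum_(k < K) \sum_(l < K) \sum_(m < K)
    s ^+ 4 * ((\prod_(i in ~: al) G j k * \prod_(i in ~: al) G l m) *
              (\prod_(i in al) G j m * \prod_(i in al) G k l)).
Proof.
rewrite /purR.
set P := fun x : config n => [forall i in ~: al, x i == false].
rewrite (eq_bigr (fun a : config n => \sum_(b | P b) \sum_(j < K) \sum_(k < K) \sum_(l < K) \sum_(m < K)
   s ^+ 4 * (((\prod_(i in al) W j (a i)) * (\prod_(i in al) W k (b i))) * \prod_(i in ~: al) G j k) *
   (((\prod_(i in al) W l (b i)) * (\prod_(i in al) W m (a i))) * \prod_(i in ~: al) G l m))); last first.
  move=> a _; apply: eq_bigr => b _.
  rewrite !rhoR_prod.
  rewrite mulrACA -exprD big_distrl mulr_sumr /=; apply: eq_bigr => j _.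
  rewrite big_distrl mulr_sumr /=; apply: eq_bigr => k _.
  rewrite big_distrr mulr_sumr /=; apply: eq_bigr => l _.
  rewrite big_distrr mulr_sumr /=; apply: eq_bigr => m _.
  by rewrite mulrA.
rewrite swap2; apply: eq_bigr => j _.
rewrite swap2; apply: eq_bigr => k _.
rewrite swap2; apply: eq_bigr => l _.
rewrite swap2; apply: eq_bigr => m _.
rewrite -(sum_support_c _ al j m) -(sum_support_c _ al k l).
rewrite mulrA big_distrl /= mulr_sumr; apply: eq_bigr => a _.
rewrite big_distrr /= mulr_sumr; apply: eq_bigr => b _.
ring.
Qed.


Lemma sum_purR n :
  \sum_(al : {set 'I_n}) purR Fprod al = s ^+ 4 * \sum_(j < K) \sum_(k < K) \sum_(l < K) \sum_(m < K)
    (G j m * G k l + G j k * G l m) ^+ n.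
Proof.
under eq_bigr do rewrite purR_prod.
rewrite mulr_sumr exchange_big; apply: eq_bigr => j _.
rewrite mulr_sumr exchange_big; apply: eq_bigr => k _.
rewrite mulr_sumr exchange_big; apply: eq_bigr => l _.
rewrite mulr_sumr exchange_big; apply: eq_bigr => m _.
rewrite -mulr_sumr; congr (_ * _).
rewrite -sum_sets; apply: eq_bigr => al _.
by rewrite -!big_split /= mulrC.
Qed.

Lemma sqnorm_prod n :
  \sum_(x : config n) (Fprod x) ^+ 2 = s ^+ 2 * \sum_(j < K) \sum_(k < K) (G j k) ^+ n.
Proof.
rewrite (eq_bigr (fun x : config n => s ^+ 2 * \sum_(j < K) \sum_(k < K)
     \prod_(i < n) (W j (x i) * W k (x i)))); last first.
  move=> x _; rewrite /Fprod exprMn; congr (_ * _); rewrite expr2 big_distrl /=.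
  apply: eq_bigr => j _; rewrite big_distrr /=; apply: eq_bigr => k _.
  by rewrite big_split.
rewrite -mulr_sumr; congr (_ * _).
rewrite exchange_big; apply: eq_bigr => j _.
rewrite exchange_big; apply: eq_bigr => k _.
rewrite -[in RHS](card_ord n) -prodr_const.
rewrite bigA_distr_bigA /=.
by [].
Qed.

End Prod.
Section Trig.
Variable R : realType.
Variable Rn : nat.
Hypothesis hR : (0 < Rn)%N.
Definition phi (k : nat) : R := pi * k%:R / Rn%:R.
Definition Wv (k : nat) (b : bool) : R := if b then sin (phi k) else cos (phi k).
Definition Wo (k : 'I_Rn) (b : bool) : R := Wv k b.

Lemma Rn_neq0 : (Rn%:R : R) != 0.
Proof. by rewrite pnatr_eq0 -lt0n. Qed.

Lemma apply_Ry (k : nat) :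
  apply1 (Ry (2 * pi * k%:R / Rn%:R)) (@ket0 R) = fun b => (Wv k b)%:C.
Proof.
apply: funext => b; rewrite /apply1 big_bool /= /ket0 /Ry.
have -> : 2 * pi * k%:R / Rn%:R / 2 = phi k.
  by rewrite /phi; field; exact: Rn_neq0.
rewrite /Wv.
by case: b => /=; rewrite mulr0 mulr1 ?add0r ?addr0.
Qed.

Lemma psiR_un_eq n x : @psiR_un R Rn n x = (@Fprod R Rn Wo 1 n x)%:C.
Proof.
rewrite /psiR_un /Fprod mul1r rmorph_sum; apply: eq_bigr => k _.
rewrite /tens_pow_ket0 /tens apply_Ry rmorph_prod.
by [].
Qed.

Lemma G_cos (j k : nat) : \sum_(b : bool) Wv j b * Wv k b = cos (phi j - phi k).
Proof. by rewrite big_bool /= cosB addrC. Qed.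

Lemma perp_sin (j k : nat) : \sum_(b : bool) (if b then - cos (phi j) else sin (phi j)) * Wv k b
  = - sin (phi k - phi j).
Proof. rewrite big_bool /= sinB; ring. Qed.

Lemma sin_diff_neq0 (j k : nat) : (j < Rn)%N -> (k < Rn)%N -> j != k -> sin (phi j - phi k) != 0.
Proof.
wlog jk : j k / (k < j)%N.
  move=> H hj hk; case: (ltngtP k j) => [kj|jk|]; last by [].
  - by move=> _; apply: (H j k kj hj hk); rewrite gtn_eqF.
  - by move=> _; rewrite -opprB sinN oppr_eq0; apply: (H k j jk hk hj); rewrite gtn_eqF.
move=> hj hk _.
have -> : phi j - phi k = pi * ((j - k)%:R / Rn%:R).
  by rewrite /phi natrB ?(ltnW jk) //; field; exact: Rn_neq0.
apply/lt0r_neq0/sin_gt0_pi; apply/andP; split.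
  apply: mulr_gt0; first exact: pi_gt0.
  by apply: divr_gt0; rewrite ltr0n // subn_gt0.
rewrite -[X in _ < X]mulr1 ltr_pM2l; last exact: pi_gt0.
rewrite ltr_pdivrMr ?ltr0n // mul1r ltr_nat.
by apply: leq_ltn_trans (leq_subr _ _) hj.
Qed.

Lemma cos_diff_lt1 (j k : nat) : (j < Rn)%N -> (k < Rn)%N -> j != k -> `|cos (phi j - phi k)| < 1.
Proof.
move=> hj hk jk; have := @sin_diff_neq0 j k hj hk jk.
have := cos2Dsin2 (phi j - phi k).
set c := cos _; set s := sin _ => E sn0.
have s2 : 0 < s ^+ 2 by rewrite exprn_even_gt0.
rewrite ltr_norml; apply/andP; split; nra.
Qed.

Lemma G_abs_le1 (j k : nat) : `|\sum_(b : bool) Wv j b * Wv k b| <= 1.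
Proof. by rewrite G_cos cos_max. Qed.

Lemma G_diag (j : nat) : \sum_(b : bool) Wv j b * Wv j b = 1.
Proof. by rewrite G_cos subrr cos0. Qed.
End Trig.
Section Lim.
Variable R : realType.

Lemma cvg_sum_seq (I : Type) (r : seq I) (f : I -> nat -> R) (a : I -> R) :
  (forall i, f i @ \oo --> a i) ->
  (fun n => \sum_(i <- r) f i n) @ \oo --> \sum_(i <- r) a i.
Proof.
move=> H; elim: r => [|i r IH].
  rewrite big_nil; under eq_fun do rewrite big_nil; exact: cvg_cst.
rewrite big_cons; under eq_fun do rewrite big_cons.
exact: cvgD.
Qed.

Lemma cvg_fsum (I : finType) (f : I -> nat -> R) (a : I -> R) :
  (forall i, f i @ \oo --> a i) ->
  (fun n => \sum_(i : I) f i n) @ \oo --> \sum_(i : I) a i.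
Proof. exact: cvg_sum_seq. Qed.

Lemma sum_delta (K : nat) (l : 'I_K) : \sum_(m < K) ((l == m)%:R : R) = 1.
Proof.
rewrite (bigD1 l) //= eqxx big1 ?addr0 // => m /negbTE.
by rewrite eq_sym => ->.
Qed.

Lemma cvg_pow_ind (x : R) (b : bool) : (b -> x = 1) -> (~~ b -> `|x| < 1) ->
  (fun n => x ^+ n) @ \oo --> (b%:R : R).
Proof.
case: b => [/(_ isT) -> _|_ /(_ isT) hx].
  under eq_fun do rewrite expr1n; exact: cvg_cst.
exact: cvg_expr.
Qed.

Lemma half_lt1 (x y z w : R) : `|x| < 1 -> `|y| <= 1 -> `|z| <= 1 -> `|w| <= 1 ->
  `|(x * y + z * w) / 2| < 1.
Proof.
move=> hx hy hz hw.
rewrite normrM [`|2^-1|]ger0_norm ?invr_ge0 ?ler0n // ltr_pdivrMr ?ltr0n //.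
have h1 : `|x * y| < 1.
  rewrite normrM; apply: (le_lt_trans _ hx).
  by rewrite -[X in _ <= X]mulr1; apply: ler_wpM2l.
have h2 : `|z * w| <= 1.
  rewrite normrM; apply: (le_trans _ hz).
  by rewrite -[X in _ <= X]mulr1; apply: ler_wpM2l.
have := ler_normD (x * y) (z * w); lra.
Qed.

End Lim.

Section Lim2.
Variable R : realType.
Variable Rn : nat.
Hypothesis hR : (0 < Rn)%N.
Local Notation GG := (@G R Rn (@Wo R Rn)).
Local Notation F1 n := (@Fprod R Rn (@Wo R Rn) 1 n).
Definition Nn (n : nat) : R := \sum_(j < Rn) \sum_(k < Rn) (GG j k) ^+ n.
Definition Sn (n : nat) : R := \sum_(j < Rn) \sum_(k < Rn) \sum_(l < Rn) \sum_(m < Rn)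
   ((GG j m * GG k l + GG j k * GG l m) / 2) ^+ n.
Definition sn (n : nat) : R := (Num.sqrt (\sum_(x : config n) (F1 n x) ^+ 2))^-1.

Lemma psiR_eq n x : @psiR R Rn n x = (@Fprod R Rn (@Wo R Rn) (sn n) n x)%:C.
Proof.
rewrite /psiR (@normalize_real R n _ _ (@psiR_un_eq R Rn hR n)) /sn.
by rewrite [in RHS]/Fprod -[in RHS](mul1r (\sum_(k < Rn) _)).
Qed.

Lemma Nn_ge0 n : 0 <= Nn n.
Proof.
have := @sqnorm_prod R Rn (@Wo R Rn) 1 n; rewrite expr1n mul1r /Nn => <-.
by apply: sumr_ge0 => x _; apply: sqr_ge0.
Qed.

Lemma Re_conc n : complex.Re (conc_ent (@psiR R Rn n)) = 1 - Sn n / (Nn n) ^+ 2.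
Proof.
rewrite (@conc_ent_real R n _ _ (@psiR_eq n)) /= sum_purR.
have -> : sn n ^+ 4 = ((Nn n) ^+ 2)^-1.
  rewrite /sn sqnorm_prod expr1n mul1r -/(Nn n) exprVn.
  by rewrite (_ : 4 = 2 * 2)%N // exprM sqr_sqrtr ?Nn_ge0.
congr (_ - _); rewrite mulrCA mulrC; congr (_ * _).
rewrite /Sn mulr_sumr; apply: eq_bigr => j _.
rewrite mulr_sumr; apply: eq_bigr => k _.
rewrite mulr_sumr; apply: eq_bigr => l _.
rewrite mulr_sumr; apply: eq_bigr => m _.
by rewrite exprMn exprVn mulrC.
Qed.

Lemma GG_diag (j : 'I_Rn) : GG j j = 1.
Proof. exact: G_diag. Qed.

Lemma GG_le1 (j k : 'I_Rn) : `|GG j k| <= 1.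
Proof. exact: G_abs_le1. Qed.

Lemma GG_lt1 (j k : 'I_Rn) : j != k -> `|GG j k| < 1.
Proof. by move=> jk; rewrite /G /Wo G_cos; apply: cos_diff_lt1. Qed.

Lemma Nn_cvg : Nn @ \oo --> (Rn%:R : R).
Proof.
have -> : (Rn%:R : R) = \sum_(j < Rn) \sum_(k < Rn) ((j == k)%:R : R).
  under eq_bigr do rewrite sum_delta.
  by rewrite sumr_const card_ord.
apply: cvg_fsum => j; apply: cvg_fsum => k.
apply: cvg_pow_ind; first by move/eqP => ->; exact: GG_diag.
exact: GG_lt1.
Qed.

Lemma Sn_cvg : Sn @ \oo --> (Rn%:R : R).
Proof.
have -> : (Rn%:R : R) = \sum_(j < Rn) \sum_(k < Rn) \sum_(l < Rn) \sum_(m < Rn)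
     (((j == k) && (k == l) && (l == m))%:R : R).
  have andR (a b : bool) : ((a && b)%:R : R) = a%:R * b%:R.
    by case: a; case: b; rewrite /= ?mul1r ?mul0r.
  have E (b : bool) (l : 'I_Rn) : \sum_(m < Rn) ((b && (l == m))%:R : R) = b%:R.
    rewrite (eq_bigr (fun m => b%:R * (l == m)%:R)) => [|m _]; last by rewrite andR.
    by rewrite -mulr_sumr sum_delta mulr1.
  symmetry.
  transitivity (\sum_(j < Rn) \sum_(k < Rn) \sum_(l < Rn) (((j == k) && (k == l))%:R : R)).
    apply: eq_bigr => j _; apply: eq_bigr => k _; apply: eq_bigr => l _; exact: E.
  transitivity (\sum_(j < Rn) \sum_(k < Rn) ((j == k)%:R : R)).
    apply: eq_bigr => j _; apply: eq_bigr => k _; exact: E.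
  transitivity (\sum_(j < Rn) (1 : R)).
    by apply: eq_bigr => j _; exact: sum_delta.
  by rewrite sumr_const card_ord.
apply: cvg_fsum => j; apply: cvg_fsum => k; apply: cvg_fsum => l; apply: cvg_fsum => m.
apply: cvg_pow_ind.
  case/andP => /andP [/eqP jk /eqP kl] /eqP lm; subst.
  by rewrite !GG_diag mulr1 -mulr2n -mulr_natr mulfV.
move=> nb.
have [jm|/negPn/eqP jm] := boolP (j != m).
  by apply: half_lt1; rewrite ?GG_lt1 ?GG_le1.
have [kl|/negPn/eqP kl] := boolP (k != l).
  by rewrite [GG j m * _]mulrC; apply: half_lt1; rewrite ?GG_lt1 ?GG_le1.
subst; rewrite addrC; apply: half_lt1; rewrite ?GG_le1 //; apply: GG_lt1.
by apply: contra nb => /eqP ->; rewrite !eqxx.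
Qed.

Lemma conc_cvg : (fun n => complex.Re (conc_ent (@psiR R Rn n))) @ \oo --> ((Rn%:R - 1) / Rn%:R : R).
Proof.
under eq_fun do rewrite Re_conc.
have Rn0 : (Rn%:R : R) != 0 by rewrite pnatr_eq0 -lt0n.
have -> : (Rn%:R - 1) / Rn%:R = 1 - Rn%:R / (Rn%:R ^+ 2) :> R.
  by field.
apply: cvgB; first exact: cvg_cst.
apply: cvgM; first exact: Sn_cvg.
apply: cvgV; first by rewrite expf_neq0.
by apply: cvgM; exact: Nn_cvg.
Qed.

End Lim2.
Section Rank.
Variable R : realType.
Local Notation C := (R[i]).
Variable Rn : nat.
Hypothesis hR : (0 < Rn)%N.
Local Notation m := (Rn.-1).

Lemma ub {h k : nat} : (h < Rn)%N -> (k < Rn)%N -> k != h -> (unbump h k < m)%N.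
Proof. move=> hR' kR kh; rewrite /unbump; case: (ltnP h k) => hk /=; lia. Qed.
Lemma bb {h q : nat} : (q < m)%N -> (bump h q < Rn)%N.
Proof. move=> qR; rewrite /bump; case: (leqP h q) => hq /=; lia. Qed.

Definition perpv (l : nat) (b : bool) : C := (if b then - cos (phi R Rn l) else sin (phi R Rn l))%:C.
Definition vv (l : nat) (b : bool) : C := (Wv R Rn l b)%:C.
Definition ip (f : bool -> C) (k : nat) : C := \sum_(b : bool) f b * vv k b.

Lemma ip_perp p k : ip (perpv p) k = (- sin (phi R Rn k - phi R Rn p))%:C.
Proof.
rewrite -perp_sin rmorph_sum; apply: eq_bigr => b _.
by rewrite rmorphM.
Qed.

Lemma ip_perp_eq k : ip (perpv k) k = 0.
Proof. by rewrite ip_perp subrr sin0 oppr0. Qed.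

Lemma ip_perp_neq p k : (p < Rn)%N -> (k < Rn)%N -> p != k -> ip (perpv p) k != 0.
Proof.
move=> hp hk pk; rewrite ip_perp.
rewrite (_ : 0 = 0%:C) // (inj_eq (@complexI _)) oppr_eq0.
by apply: sin_diff_neq0 => //; rewrite eq_sym.
Qed.

Lemma ip_vv k : ip (vv k) k = 1.
Proof.
rewrite /ip (eq_bigr (fun b => (Wv R Rn k b * Wv R Rn k b)%:C)) => [|b _]; last by rewrite rmorphM.
by rewrite -rmorph_sum G_diag.
Qed.

Definition Lf {n : nat} (j l : 'I_Rn) (q : 'I_n) : bool -> C :=
  if (q < m)%N then perpv (bump j q) else
  if (q - m < m)%N then perpv (bump l (q - m)) else vv l.

Definition Phi {n : nat} (psi : state R n) (j l : 'I_Rn) : C :=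
  \sum_(x : config n) (\prod_(q < n) Lf j l q (x q)) * psi x.

Lemma Phi_decomp n (psi : state R n) r (c : 'I_r -> C) (ph : 'I_r -> 'I_n -> bool -> C) :
  (forall x, psi x = \sum_(i < r) c i * tens (ph i) x) ->
  forall j l, Phi psi j l = \sum_(i < r) c i * \prod_(q < n) \sum_(b : bool) Lf j l q b * ph i q b.
Proof.
move=> H j l; rewrite /Phi.
under eq_bigr do rewrite H big_distrr.
rewrite exchange_big; apply: eq_bigr => i _ /=.
rewrite -functional_tens mulr_sumr; apply: eq_bigr => x _.
by rewrite mulrCA.
Qed.

Lemma prod_k_zero n (hn : (m + m <= n)%N) (j l k : 'I_Rn) :
  (k != j) || (k != l) -> \prod_(q < n) ip (Lf j l q) k = 0.
Proof.
case/orP => [kj|kl].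
  have hq0 : (unbump j k < n)%N.
    by apply: leq_trans (ub (ltn_ord j) (ltn_ord k) kj) _; lia.
  rewrite (bigD1 (Ordinal hq0)) //= /Lf /= (ub (ltn_ord j) (ltn_ord k) kj).
  have kj' : (k : nat) \in predC1 (j : nat) by rewrite inE.
  by rewrite (unbumpK kj') ip_perp_eq mul0r.
have hu := ub (ltn_ord l) (ltn_ord k) kl.
have hq1 : (m + unbump l k < n)%N by lia.
rewrite (bigD1 (Ordinal hq1)) //= /Lf /=.
have -> : (m + unbump l k < m)%N = false by lia.
rewrite addKn hu.
have kl' : (k : nat) \in predC1 (l : nat) by rewrite inE.
by rewrite (unbumpK kl') ip_perp_eq mul0r.
Qed.

Lemma d_neq0 n (j : 'I_Rn) : \prod_(q < n) ip (Lf j j q) j != 0.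
Proof.
apply/negP => /prodf_eq0 [q _]; apply/negP.
rewrite /Lf; case: ifP => h1.
  by apply: ip_perp_neq; rewrite ?bb // eq_sym neq_bump.
case: ifP => h2.
  by apply: ip_perp_neq; rewrite ?bb // eq_sym neq_bump.
by rewrite ip_vv oner_eq0.
Qed.

Lemma sum_k n (hn : (m + m <= n)%N) (j l : 'I_Rn) :
  \sum_(k < Rn) \prod_(q < n) ip (Lf j l q) k
  = if j == l then \prod_(q < n) ip (Lf j j q) j else 0.
Proof.
case: eqP => [<-|/eqP jl].
  rewrite (bigD1 j) //= [X in _ + X]big1 ?addr0 // => k kj.
  by apply: prod_k_zero; rewrite // kj.
apply: big1 => k _; apply: prod_k_zero => //.
by case: (eqVneq k j) => [->|//]; rewrite jl orbT.
Qed.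

Lemma rank_lb n (hn : (m + m <= n)%N) (s : C) (psi : state R n) : s != 0 ->
  (forall x, psi x = \sum_(k < Rn) s * tens (fun _ => vv k) x) ->
  forall r, has_cp_decomp psi r -> (Rn <= r)%N.
Proof.
move=> s0 Hpsi r [c [ph H]].
pose T : 'M[C]_Rn := \matrix_(j, l) Phi psi j l.
pose U : 'M[C]_(Rn, r) := \matrix_(j, i) (c i * \prod_(q < n | (q < m)%N)
   \sum_(b : bool) perpv (bump j q) b * ph i q b).
pose V : 'M[C]_(r, Rn) := \matrix_(i, l) \prod_(q < n | ~~ (q < m)%N)
   \sum_(b : bool) (if (q - m < m)%N then perpv (bump l (q - m)) else vv l) b * ph i q b.
have TUV : T = U *m V.
  apply/matrixP => j l; rewrite !mxE (@Phi_decomp n psi r c ph H); apply: eq_bigr => i _.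
  rewrite !mxE -mulrA; congr (_ * _).
  rewrite (bigID (fun q : 'I_n => (q < m)%N)) /=; congr (_ * _).
    by apply: eq_bigr => q hq; rewrite /Lf hq.
  by apply: eq_bigr => q hq; rewrite /Lf (negbTE hq).
have Td : T = diag_mx (\row_j (s * \prod_(q < n) ip (Lf j j q) j)).
  apply/matrixP => j l; rewrite !mxE (@Phi_decomp n psi Rn (fun _ => s) (fun k _ => vv k) Hpsi).
  rewrite -mulr_sumr (@sum_k n hn).
  by case: eqP => [->|_]; rewrite ?mxE ?mulr0 // mulr1n.
have rT : \rank T = Rn.
  apply: mxrank_unit; rewrite unitmxE Td det_diag unitfE.
  apply/prodf_neq0 => j _; rewrite mxE mulf_neq0 //; exact: d_neq0.
rewrite -rT TUV; apply: leq_trans (mxrankM_maxl _ _) _.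
exact: rank_leq_col.
Qed.

End Rank.
Section Final.
Variable R : realType.
Variable Rn : nat.
Hypothesis hR : (0 < Rn)%N.
Local Notation m := (Rn.-1).

Lemma canon_un n x : @psiR_un R Rn n x = \sum_(k < Rn) 1 * tens (fun _ => @vv R Rn k) x.
Proof.
rewrite (@psiR_un_eq R Rn hR n x) /Fprod rmorphM rmorph1 rmorph_sum.
rewrite mulr_sumr; apply: eq_bigr => k _; rewrite rmorph_prod.
by [].
Qed.

Lemma canon n x : @psiR R Rn n x = \sum_(k < Rn) (sn R Rn n)%:C * tens (fun _ => @vv R Rn k) x.
Proof.
rewrite (@psiR_eq R Rn hR n x) /Fprod rmorphM rmorph_sum.
rewrite mulr_sumr; apply: eq_bigr => k _; rewrite rmorph_prod.
by [].
Qed.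

Lemma un_neq0 n : (m + m <= n)%N -> @psiR_un R Rn n <> (fun _ => 0).
Proof.
move=> hn H0.
pose j : 'I_Rn := Ordinal hR.
have := @Phi_decomp R Rn n _ Rn (fun _ => 1) (fun k _ => @vv R Rn k) (@canon_un n) j j.
rewrite -mulr_sumr (@sum_k R Rn hR n hn j j) eqxx mul1r.
have -> : @Phi R Rn n (@psiR_un R Rn n) j j = 0.
  by rewrite /Phi H0; apply: big1 => x _; rewrite mulr0.
move=> E; have := @d_neq0 R Rn hR n j; rewrite -E.
by rewrite eqxx.
Qed.

Lemma sn_neq0 n : (m + m <= n)%N -> (sn R Rn n)%:C != 0 :> R[i].
Proof.
move=> hn; rewrite (_ : 0 = 0%:C) // (inj_eq (@complexI _)) /sn invr_eq0.
rewrite sqrtr_eq0 -ltNge lt_def; apply/andP; split; last first.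
  by apply: sumr_ge0 => x _; exact: sqr_ge0.
apply/negP => /eqP /psumr_eq0P H; apply: (@un_neq0 n hn).
apply: funext => x; rewrite (@psiR_un_eq R Rn hR n x).
have := H (fun i _ => sqr_ge0 _) x isT => /eqP; rewrite sqrf_eq0 => /eqP ->.
by [].
Qed.

End Final.

Theorem mainTheorem7 (R : realType) (Rn : nat) (hR : (2 <= Rn)%N) :
  (exists N : nat, forall n : nat, (N <= n)%N -> @psiR_un R Rn n <> (fun _ => 0))
  /\ ((fun n : nat => complex.Re (conc_ent (@psiR R Rn n))) @ \oo --> ((Rn%:R - 1) / Rn%:R : R))
  /\ (exists n0 : nat, forall n : nat, (n0 <= n)%N -> cp_rank_eq (@psiR R Rn n) Rn).
Proof.
have hR0 : (0 < Rn)%N by apply: leq_trans hR.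
split; first by exists (Rn.-1 + Rn.-1)%N => n hn; exact: (@un_neq0 R Rn hR0 n hn).
split; first exact: (@conc_cvg R Rn hR0).
exists (Rn.-1 + Rn.-1)%N => n hn; split.
  by exists (fun _ => (sn R Rn n)%:C), (fun k _ => @vv R Rn k); exact: canon.
exact: (@rank_lb R Rn hR0 n hn _ _ (@sn_neq0 R Rn hR0 n hn) (@canon R Rn hR0 n)).
Qed.
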